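(* Let $E$ be a real affine space of dimension $n$ with a system of coordinates $(\ell_1,\dots,\ell_n)$, let $\alpha\in\mathbb R$ and $F=\{z\in E: z_1=\alpha\}$. (i) Let $k\in\{1,\dots,n\}$, let $A\subset F$ belong to the $\sigma$-algebra of subsets of $F$ generated by the restrictions to $F$ of $\ell_2,\dots,\ell_k$, and let $v,w\in\vec E$ satisfy $v_1=w_1=1$ and $(v_2,\dots,v_k)=(w_2,\dots,w_k)$. Then $A_v=A_w$. (ii) Let $\ell$ be an affine form on $E$ which is non-constant on $F$, let $A=F\cap\{\ell\ge 0\}$, and let $v,w\in\vec E$ satisfy $v_1=w_1=1$ and $\vec\ell(v)>\vec\ell(w)$. Then $A_v\subsetneq A_w$. (iii) With $\ell$ and $A=F\cap\{\ell\ge0\}$ as in (ii), let $(v^p)$ be a sequence in $\vec E$ with $v^p_1=1$ for all $p$ and $\vec\ell(v^p)\uparrow+\infty$. Then for every $\mu\in\mathcal M(E)$, $\lim_{p\to\infty}\mu(A_{v^p})=0$.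
   Context: $\vec E$ is the vector space associated with $E$; for an affine form $\ell$ on $E$, $\vec\ell$ is its associated linear form. A system of coordinates is a family $(\ell_1,\dots,\ell_n)$ of affine forms on $E$ such that $x\mapsto(\ell_1(x),\dots,\ell_n(x))$ is a bijection $E\to\mathbb R^n$; for $x\in E$ and $v\in\vec E$ one writes $x_i=\ell_i(x)$ and $v_i=\vec\ell_i(v)$. For $u\in\vec E$ with $u_1\neq 0$ and $A\subset F$, $A_u=\{x\in E: x_1\ge\alpha \text{ and } x-(x_1-\alpha)\frac{u}{u_1}\in A\}$ (the preimage of $A$ under the projection $F+\mathbb R_+u\to F$ along $u$, when $u_1>0$). $\mathcal M(E)$ is the set of finite non-negative Borel measures $\mu$ on $E$ such that $\mu(H)=0$ for every affine hyperplane $H$ of $E$. *)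

(* Defs.v *)
From HB Require Import structures.
From mathcomp Require Import all_boot all_algebra all_classical all_reals all_analysis.
From mathcomp Require Import matrix_normedtype.
Set Implicit Arguments. Unset Strict Implicit. Unset Printing Implicit Defensive.
Import GRing.Theory Num.Theory numFieldNormedType.Exports numFieldTopology.Exports.
Local Open Scope classical_set_scope.
Local Open Scope ring_scope.

(* The real affine space E of dimension n, modelled (after choice of an origin)
   by the vector space 'rV[R]_n, equipped with its Borel sigma-algebra
   (generated by the open sets of its canonical topology).  The associated
   vector space \vec E is 'rV[R]_n itself. *)
Definition Espace (R : realType) (n : nat) := g_sigma_algebraType (@open 'rV[R]_n).

Definition affine_form (R : realType) (n : nat) (l : Espace R n -> R) : Prop :=
  forall (x y : Espace R n) (t : R),
    l ((1 - t) *: x + t *: y) = (1 - t) * l x + t * l y.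

Definition lin_part (R : realType) (n : nat) (l : Espace R n -> R) (v : Espace R n) : R :=
  l v - l 0.

(* a system of coordinates (l_1, ..., l_n), indexed by 1..n *)
Definition coord_system (R : realType) (n : nat) (l : nat -> Espace R n -> R) : Prop :=
  (forall i, (1 <= i <= n)%N -> affine_form (l i)) /\
  bijective (fun x : Espace R n => \row_(i < n) l i.+1 x).

Definition Fset (R : realType) (n : nat) (l : nat -> Espace R n -> R) (alpha : R)
  : set (Espace R n) := [set z | l 1%N z = alpha].

Definition Aset (R : realType) (n : nat) (l : nat -> Espace R n -> R) (alpha : R)
  (A : set (Espace R n)) (u : Espace R n) : set (Espace R n) :=
  [set x | alpha <= l 1%N x /\
           A (x - ((l 1%N x - alpha) / lin_part (l 1%N) u) *: u)].

Definition gen_sigma_F (R : realType) (n : nat) (l : nat -> Espace R n -> R)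
  (alpha : R) (k : nat) : set (set (Espace R n)) :=
  <<s Fset l alpha,
      [set S | exists j (B : set R), [/\ (2 <= j <= k)%N, measurable B &
                 S = Fset l alpha `&` (l j) @^-1` B]] >>.

Definition affine_hyperplane (R : realType) (n : nat) (H : set (Espace R n)) : Prop :=
  exists h : Espace R n -> R,
    [/\ affine_form h, (exists x y, h x <> h y) & H = [set x | h x = 0]].

Definition nice_measure (R : realType) (n : nat)
  (mu : {finite_measure set Espace R n -> \bar R}) : Prop :=
  forall H, affine_hyperplane H -> mu H = 0%E.

(* Main.v *)
Require Import Defs.
From HB Require Import structures.
From mathcomp Require Import all_boot all_algebra all_classical all_reals all_analysis.
From mathcomp Require Import matrix_normedtype.
From mathcomp Require Import ring lra all_order.
Import Order.TTheory.
Import GRing.Theory Num.Theory numFieldNormedType.Exports numFieldTopology.Exports.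
Local Open Scope classical_set_scope.
Local Open Scope ring_scope.

Section Aff.
Context {R : realType} {n : nat}.

Lemma aff_scale {f : Espace R n -> R} : affine_form f ->
  forall c (x : 'rV[R]_n), f (c *: x) = (1 - c) * f 0 + c * f x.
Proof. by move=> hf c x; have := hf 0 x c; rewrite scaler0 add0r. Qed.

Lemma aff_add {f : Espace R n -> R} : affine_form f ->
  forall (x y : 'rV[R]_n), f (x + y) = f x + f y - f 0.
Proof.
move=> hf x y; have := hf (2 *: x) (2 *: y) (2^-1).
have h2 : (1 - 2^-1 : R) = 2^-1 by field.
rewrite h2 !scalerA mulVf ?pnatr_eq0 // !scale1r => ->.
rewrite !(aff_scale hf); by field.
Qed.

Lemma aff_sub {f : Espace R n -> R} : affine_form f ->
  forall c (x v : 'rV[R]_n), f (x - c *: v) = f x - c * (f v - f 0).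
Proof.
move=> hf c x v; rewrite -scaleNr (aff_add hf) (aff_scale hf); ring.
Qed.

Lemma aff_sum {f : Espace R n -> R} : affine_form f ->
  forall (x : 'rV[R]_n), f x = f 0 + \sum_(i < n) x 0 i * (f (delta_mx 0 i) - f 0).
Proof.
move=> hf x; rewrite {1}(row_sum_delta x).
elim: (index_enum _) => [|i r IH]; first by rewrite !big_nil addr0.
rewrite !big_cons (aff_add hf) (aff_scale hf) IH; ring.
Qed.

Lemma aff_cont {f : Espace R n -> R} : affine_form f ->
  continuous (f : 'rV[R]_n -> R).
Proof.
move=> hf; have -> : (f : 'rV[R]_n -> R) = fun x => f 0 + \sum_(i < n) x 0 i * (f (delta_mx 0 i) - f 0).
  by apply: funext => x; exact: aff_sum.
have hs : continuous (fun x : 'rV[R]_n => \sum_(i < n) x 0 i * (f (delta_mx 0 i) - f 0)).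
  apply: continuous_big; first exact: add_continuous.
  move=> i _.
  move=> y. have hc : continuous (fun M : 'rV[R]_n => M 0 i) := @coord_continuous R 1 n 0 i.
  exact: (cvgM (hc y) (cvg_cst _)).
move=> x; exact: (cvgD (cvg_cst _) (hs x)).
Qed.

Lemma meas_open (S : set 'rV[R]_n) : open S -> measurable (S : set (Espace R n)).
Proof. by move=> oS; apply: sub_sigma_algebra. Qed.

Lemma meas_ge {f : Espace R n -> R} a : affine_form f ->
  measurable ([set x | a <= f x] : set (Espace R n)).
Proof.
move=> hf.
have -> : [set x | a <= f x] = ~` ((f : 'rV[R]_n -> R) @^-1` [set y | y < a]).
  apply/seteqP; split => x /= h.
    by rewrite real_ltNge ?num_real ?h.
  by rewrite real_leNgt ?num_real; apply/negP.
apply: measurableC; apply: meas_open; apply: open_comp; last exact: open_lt.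
by move=> y _; exact: aff_cont.
Qed.
End Aff.

Section Main.
Context {R : realType} {n : nat} {l : nat -> Espace R n -> R} {alpha : R}.
Hypothesis hl1 : affine_form (l 1%N).

Lemma aff_comb (f g : Espace R n -> R) a c : affine_form f -> affine_form g ->
  affine_form (fun x => f x - (g x - a) * c).
Proof. by move=> hf hg x y t; rewrite hf hg; ring. Qed.

Lemma aff_lin (f : Espace R n -> R) a b : affine_form f ->
  affine_form (fun x => a + b * f x).
Proof. by move=> hf x y t; rewrite hf; ring. Qed.

Lemma Aset_char (ell : Espace R n -> R) (v : 'rV[R]_n) : affine_form ell ->
  lin_part (l 1%N) v = 1 ->
  Aset l alpha (Fset l alpha `&` [set x | 0 <= ell x]) v =
  [set x | alpha <= l 1%N x /\ 0 <= ell x - (l 1%N x - alpha) * lin_part ell v].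
Proof.
move=> he hv; have hv' : l 1%N v - l 1%N 0 = 1 by exact: hv.
apply/seteqP; split => x /=; rewrite /Aset /Fset /= hv divr1 (aff_sub hl1) (aff_sub he).
- by case=> ? [_ ?].
- case=> ? ?; split=> //; split=> //; rewrite hv'; ring.
Qed.

Lemma part_i k A (v w : 'rV[R]_n) :
  (forall j, (2 <= j <= k)%N -> affine_form (l j)) ->
  gen_sigma_F l alpha k A -> lin_part (l 1%N) v = 1 -> lin_part (l 1%N) w = 1 ->
  (forall j, (2 <= j <= k)%N -> lin_part (l j) v = lin_part (l j) w) ->
  Aset l alpha A v = Aset l alpha A w.
Proof.
move=> haff hA hv hw hvw.
pose G := [set S : set (Espace R n) | forall y y', Fset l alpha y -> Fset l alpha y' ->
   (forall j, (2 <= j <= k)%N -> l j y = l j y') -> (S y <-> S y')].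
have hG : gen_sigma_F l alpha k `<=` G.
  apply: smallest_sub.
  - split.
    + by move=> y y' _ _ _; split.
    + move=> S GS y y' Fy Fy' e /=; have := GS y y' Fy Fy' e; rewrite /Fset in Fy Fy' *; tauto.
    + move=> S GS y y' Fy Fy' e /=; split => -[i _ h]; exists i => //; by apply/(GS i y y' Fy Fy' e).
  - move=> S [j [B [hj _ ->]]] y y' Fy Fy' e /=; rewrite /preimage /= (e j hj).
    rewrite /Fset in Fy Fy' *; tauto.
have hv' : l 1%N v - l 1%N 0 = 1 by exact: hv.
have hw' : l 1%N w - l 1%N 0 = 1 by exact: hw.
apply/seteqP; split => x /=; rewrite /Aset /= hv hw !divr1 => -[hx h]; split=> //.
all: have F1 : Fset l alpha (x - (l 1%N x - alpha) *: v) by rewrite /Fset /= (aff_sub hl1) hv'; ring.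
all: have F2 : Fset l alpha (x - (l 1%N x - alpha) *: w) by rewrite /Fset /= (aff_sub hl1) hw'; ring.
all: have E : forall j, (2 <= j <= k)%N -> l j (x - (l 1%N x - alpha) *: v) = l j (x - (l 1%N x - alpha) *: w)
  by move=> j hj; rewrite !(aff_sub (haff j hj)); have := hvw j hj; rewrite /lin_part => ->.
all: have := hG A hA _ _ F1 F2 E; tauto.
Qed.

End Main.

Theorem lemma8 (R : realType) (n : nat) (hn : (0 < n)%N)
  (l : nat -> Espace R n -> R) (hl : coord_system l) (alpha : R) :
  (* (i) *)
  (forall (k : nat) (A : set (Espace R n)) (v w : Espace R n),
     (1 <= k <= n)%N ->
     A `<=` Fset l alpha -> gen_sigma_F l alpha k A ->
     lin_part (l 1%N) v = 1 -> lin_part (l 1%N) w = 1 ->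
     (forall j, (2 <= j <= k)%N -> lin_part (l j) v = lin_part (l j) w) ->
     Aset l alpha A v = Aset l alpha A w) /\
  (* (ii) *)
  (forall (ell : Espace R n -> R) (v w : Espace R n),
     affine_form ell ->
     (exists x y, Fset l alpha x /\ Fset l alpha y /\ ell x <> ell y) ->
     lin_part (l 1%N) v = 1 -> lin_part (l 1%N) w = 1 ->
     lin_part ell v > lin_part ell w ->
     Aset l alpha (Fset l alpha `&` [set x | 0 <= ell x]) v `<`
     Aset l alpha (Fset l alpha `&` [set x | 0 <= ell x]) w) /\
  (* (iii) *)
  (forall (ell : Espace R n -> R) (vp : nat -> Espace R n),
     affine_form ell ->
     (exists x y, Fset l alpha x /\ Fset l alpha y /\ ell x <> ell y) ->
     (forall p, lin_part (l 1%N) (vp p) = 1) ->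
     {homo (fun p => lin_part ell (vp p)) : p q / (p <= q)%N >-> p <= q} ->
     (fun p => lin_part ell (vp p)) @ \oo --> +oo ->
     forall mu : {finite_measure set Espace R n -> \bar R},
       nice_measure mu ->
       (fun p => mu (Aset l alpha (Fset l alpha `&` [set x | 0 <= ell x]) (vp p)))
         @ \oo --> 0%E).
Proof.
have hl1 : affine_form (l 1%N) by apply: hl.1.
split.
  move=> k A v w /andP[_ hk] _ hA hv hw hvw.
  apply: (part_i hl1 k A v w _ hA hv hw hvw) => j /andP[h2 hj]; apply: hl.1.
  by apply/andP; split; [exact: leq_trans h2 | exact: leq_trans hj hk].
split.
  move=> ell v w he [x0 [y0 [Fx0 [Fy0 hne]]]] hv hw hlt.
  rewrite (Aset_char hl1 ell v he hv) (Aset_char hl1 ell w he hw).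
  split.
    move=> x /= [h1 h2]; split => //; nra.
  move=> hsub.
  pose s := ell x0 / (ell x0 - ell y0).
  pose z := (1 - s) *: x0 + s *: y0.
  have hd : ell x0 - ell y0 != 0 by rewrite subr_eq0; apply/eqP.
  have ez : ell z = 0 by rewrite /z he /s; field.
  have lz : l 1%N z = alpha.
    by rewrite /z hl1; rewrite /Fset /= in Fx0 Fy0; rewrite Fx0 Fy0; ring.
  have hw' : l 1%N w - l 1%N 0 = 1 by exact: hw.
  have lx : l 1%N (z + w) = alpha + 1 by rewrite (aff_add hl1) lz; lra.
  have ex : ell (z + w) = ell z + lin_part ell w by rewrite (aff_add he) /lin_part; ring.
  have := hsub (z + w); rewrite /= lx ex ez.
  case; first by split; lra.
  by move=> _ h; move: hlt; rewrite -subr_gt0; lra.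
move=> ell vp he [x0 [y0 [Fx0 [Fy0 hne]]]] hv hmono hinf mu hmu.
pose Ap p := Aset l alpha (Fset l alpha `&` [set x | 0 <= ell x]) (vp p).
have hAp p : Ap p = [set x | alpha <= l 1%N x /\
     0 <= ell x - (l 1%N x - alpha) * lin_part ell (vp p)] by exact: Aset_char.
have mA p : measurable (Ap p).
  rewrite hAp; apply: (@measurableI _ _ [set x | alpha <= l 1%N x]
     [set x | 0 <= ell x - (l 1%N x - alpha) * lin_part ell (vp p)]).
    exact: meas_ge.
  by apply: meas_ge; apply: aff_comb.
have mF : measurable (Fset l alpha).
  have -> : Fset l alpha = [set x | alpha <= l 1%N x] `&` [set x | - alpha <= 0 + (-1) * l 1%N x].
    by apply/seteqP; split => x; rewrite /Fset /= => h; [split; lra | lra].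
  apply: measurableI; first exact: meas_ge.
  by apply: meas_ge; apply: aff_lin.
have hcap : \bigcap_p Ap p `<=` Fset l alpha.
  move=> x hx; rewrite /Fset /=.
  have := hx 0%N I; rewrite hAp /= => -[h0 _].
  apply/eqP; rewrite eq_le h0 andbT; rewrite leNgt; apply/negP => hgt.
  pose t := l 1%N x - alpha.
  have tp : 0 < t by rewrite /t subr_gt0.
  pose q := ell x / t.
  have hq : ell x = q * t by rewrite /q divfK // gt_eqF.
  have := (cvgryPge _).1 hinf (q + 1).
  case => N _ HN; have hN := HN N (leqnn N); rewrite /= in hN.
  have := hx N I; rewrite hAp /= => -[_]; rewrite -/t hq; nra.
have hF0 : mu (Fset l alpha) = 0%E.
  apply: hmu; exists (fun x => l 1%N x - alpha); split.
  - by move=> x y t; rewrite hl1; ring.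
  - case: hl => _ [g _ hg2].
    have e r : l 1%N (g r) = r 0 (Ordinal hn).
      by have := congr1 (fun M : 'rV[R]_n => M 0 (Ordinal hn)) (hg2 r); rewrite /= mxE.
    exists (g (const_mx 0)), (g (const_mx 1)); rewrite !e !mxE; lra.
  - by apply/seteqP; split => x; rewrite /Fset /= => h; lra.
have hc0 : mu (\bigcap_p Ap p) = 0%E.
  apply/eqP; rewrite eq_le measure_ge0 andbT -hF0.
  apply: le_measure => //; rewrite inE //; exact: bigcapT_measurable.
rewrite -hc0.
apply: nonincreasing_cvg_mu => //.
- by have /fin_numPlt/andP[_ ->] := fin_num_measure mu _ (mA 0%N).
- exact: bigcapT_measurable.
- move=> p p' pp'; apply/subsetPset; change (Ap p' `<=` Ap p); rewrite !hAp => x /= [h1 h2]; split => //.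
  have := hmono _ _ pp'; nra.
Qed.
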